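(* Let $L$ be a $\mathbb{Z}$-colorable link. Then there exist a regular diagram $D$ of $L$ and a $\mathbb{Z}$-coloring $\gamma$ on $D$ such that $\mathrm{Im}(\gamma)=\{0,a_1,a_2,\dots,a_n\}$ for some positive integer $n$ and integers $a_i>0$ $(i=1,\dots,n)$.
   Context: Let $D$ be a regular diagram of a link $L$; an arc of $D$ is a maximal connected piece of the diagram that is unbroken (it passes over crossings and ends at undercrossings). A $\mathbb{Z}$-coloring on $D$ is a map $\gamma:\{\text{arcs of } D\}\to\mathbb{Z}$ such that at each crossing of $D$ with over arc $a$ and under arcs $b,c$ one has $2\gamma(a)=\gamma(b)+\gamma(c)$. The coloring is trivial if it assigns the same color to all arcs. A link is $\mathbb{Z}$-colorable if it has a diagram admitting a non-trivial $\mathbb{Z}$-coloring. *)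

(* Defs.v *)
From mathcomp Require Import all_boot all_order all_algebra.
Set Implicit Arguments. Unset Strict Implicit. Unset Printing Implicit Defensive.
Import Order.TTheory GRing.Theory Num.Theory.
Local Open Scope ring_scope.

(* The combinatorial data of a regular link diagram that Z-colorings depend on:
   a finite set of arcs and a finite set of crossings, each crossing having an
   over arc and two under arcs (the arcs ending at that crossing). *)
Record diagram := Diagram {
  darc : finType;
  crossing : finType;
  over_arc : crossing -> darc;
  under_arc1 : crossing -> darc;
  under_arc2 : crossing -> darc
}.

Definition Zcoloring (D : diagram) (gamma : darc D -> int) : Prop :=
  forall c : crossing D,
    2 * gamma (over_arc c) = gamma (under_arc1 c) + gamma (under_arc2 c).

Definition trivial_coloring (D : diagram) (gamma : darc D -> int) : Prop :=
  forall a b : darc D, gamma a = gamma b.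

Definition Zcolorable (link : Type) (is_diagram_of : diagram -> link -> Prop)
    (L : link) : Prop :=
  exists D : diagram, is_diagram_of D L /\
    exists gamma : darc D -> int, Zcoloring gamma /\ ~ trivial_coloring gamma.

Definition image_of (D : diagram) (gamma : darc D -> int) (z : int) : Prop :=
  exists x : darc D, gamma x = z.

(* Main.v *)
Require Import Defs.
From mathcomp Require Import all_boot all_order all_algebra.
From mathcomp Require Import zify.
Import Order.TTheory GRing.Theory Num.Theory.
Local Open Scope ring_scope.

Theorem lemma2p1 (link : Type) (is_diagram_of : diagram -> link -> Prop)
    (L : link) :
  Zcolorable is_diagram_of L ->
  exists D : diagram, is_diagram_of D L /\
    exists gamma : darc D -> int, Zcoloring gamma /\
      exists (n : nat) (a : 'I_n -> int),
        (0 < n)%N /\ (forall i, 0 < a i) /\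
        (forall z : int, image_of gamma z <-> (z = 0 \/ exists i, a i = z)).
Proof.
move=> [D [HD [gamma [Hcol Hnt]]]].
have [x0 _] : exists x0 : darc D, True.
  case: (pickP (fun _ : darc D => true)) => [x _|H]; first by exists x.
  by exfalso; apply: Hnt => a; have := H a.
pose xm := [arg min_(i < x0) gamma i]%O.
pose xM := [arg max_(i > x0) gamma i]%O.
have Hmin : forall x, gamma xm <= gamma x.
  rewrite /xm; case: arg_minP => // i _ H x; exact: H.
have Hmax : forall x, gamma x <= gamma xM.
  rewrite /xM; case: arg_maxP => // i _ H x; exact: H.
pose g x := gamma x - gamma xm.
have Hg0 : forall x, 0 <= g x by move=> x; rewrite /g subr_ge0.
have HM : 0 < g xM.
  rewrite ltNge; apply/negP => H; apply: Hnt => a b.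
  have := Hmin a; have := Hmin b; have := Hmax a; have := Hmax b.
  move: H; rewrite /g; lia.
exists D; split => //; exists g; split.
  move=> c; rewrite /g; have := Hcol c; lia.
exists #|darc D|.
exists (fun i => if 0 < g (enum_val i) then g (enum_val i) else g xM).
split; first by apply/card_gt0P; exists x0.
split; first by move=> i; case: ifP.
move=> z; split.
  move=> [x <-]; have := Hg0 x; rewrite le0r => /orP [/eqP -> | Hx]; first by left.
  right; exists (enum_rank x); rewrite enum_rankK Hx //.
move=> [-> | [i <-]]; first by exists xm; rewrite /g subrr.
by case: ifP => _; [exists (enum_val i) | exists xM].
Qed.
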